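(* Let $F$ be quadratic and assume (A1), (A2). Let $\mathbf C=1$ for \texttt{MCM} and $\mathbf C=N$ for \texttt{Rand-MCM} (as in the context). Then for any $k\ge1$, $$\mathbb{E}\Big[\Big\|\frac1N\sum_{i=1}^N\nabla F(\widehat w^i_{k-1})-\nabla F(w_{k-1})\Big\|^2\,\Big|\,w_{k-1}\Big]\le\frac{L^2\omega_{\mathrm{dwn}}}{\mathbf C}\cdot\frac1N\sum_{i=1}^N\|w_{k-1}-H^i_{k-2}\|^2.$$
   Context: $N\ge1$ homogeneous workers, objective $F:\mathbb{R}^d\to\mathbb{R}$. $F$ is quadratic: there are a symmetric matrix $A$ and a point $w_*$ with $F(w)-F(w_* )=\frac12(w-w_* )^\top A(w-w_* )$. Worker $i$ at iteration $k$ has an oracle $g_k^i$ with $\mathbb{E}[g_k^i(w)]=\nabla F(w)$; all compressions use fresh independent randomness. \texttt{Rand-MCM} with step $\gamma$, rate $\alpha_{\mathrm{dwn}}$: $H^i_{-1}=w_0$, $\widehat w_0^i=w_0$; for $k\ge1$: $w_k=w_{k-1}-\gamma\frac1N\sum_i\mathcal{C}_{\mathrm{up}}(g_k^i(\widehat w^i_{k-1}))$, $\widehat w^i_k=H^i_{k-1}+\mathcal{C}_{\mathrm{dwn},i}(w_k-H^i_{k-1})$, $H^i_k=H^i_{k-1}+\alpha_{\mathrm{dwn}}\mathcal{C}_{\mathrm{dwn},i}(w_k-H^i_{k-1})$ (same realization), with $\mathcal{C}_{\mathrm{dwn},1},\dots,\mathcal{C}_{\mathrm{dwn},N}$ mutually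 independent. \texttt{MCM} is the same with a single shared memory $H_k^i=H_k$ and a single downlink compression shared by all workers, so $\widehat w^i_k=\widehat w_k$ for all $i$. $\mathbb{E}[\cdot\mid w_{k-1}]$ is the conditional expectation given all randomness up to the computation of $w_{k-1}$ (so $H^i_{k-2}$ is measurable). (A1) for some $\omega_{\mathrm{up}},\omega_{\mathrm{dwn}}>0$, all $w$: unbiased compressions with $\mathbb{E}\|\mathcal{C}(w)-w\|^2\le\omega\|w\|^2$ for the respective $\omega$. (A2) $F$ is $L$-smooth. *)

(* Defs.v *)
From HB Require Import structures.
From mathcomp Require Import all_boot all_order all_algebra.
From mathcomp Require Import all_classical all_reals all_analysis.
Set Implicit Arguments. Unset Strict Implicit. Unset Printing Implicit Defensive.
Import Order.TTheory GRing.Theory Num.Theory.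
Import numFieldNormedType.Exports.
Local Open Scope classical_set_scope.
Local Open Scope ring_scope.

Definition sqnorm (R : realType) (d : nat) (v : 'cV[R]_d) : R :=
  \sum_(j < d) (v j ord0) ^+ 2.

Definition grad (R : realType) (d : nat) (F : 'cV[R]_d -> R) (w : 'cV[R]_d)
  : 'cV[R]_d :=
  \col_(j < d) derive F w (delta_mx j ord0).

Definition L_smooth (R : realType) (d : nat) (F : 'cV[R]_d -> R) (L : R) :=
  forall x y, Num.sqrt (sqnorm (grad F x - grad F y)) <= L * Num.sqrt (sqnorm (x - y)).

Definition quadratic_obj (R : realType) (d : nat) (F : 'cV[R]_d -> R)
  (A : 'M[R]_d) (wstar : 'cV[R]_d) :=
  A^T = A /\
  forall w, F w - F wstar = 2^-1 * ((w - wstar)^T *m A *m (w - wstar)) ord0 ord0.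

Definition compressor (R : realType) (dT : measure_display) (T : measurableType dT)
  (P : probability T R) (d : nat) (C : T -> 'cV[R]_d -> 'cV[R]_d) (omega : R) :=
  [/\ (forall x j, measurable_fun setT (fun t => C t x j ord0)),
      (forall x j, (\int[P]_t (C t x j ord0)%:E = (x j ord0)%:E)%E) &
      (forall x, (\int[P]_t (sqnorm (C t x - x))%:E <= (omega * sqnorm x)%:E)%E)].

(* Mutual independence of the random vectors X_1, ..., X_N in R^d: product
   rule on every finite subfamily, for the generating pi-system of events
   {X_i in B_i1 x ... x B_id} (B_ij Borel sets). *)
Definition indep_vecs (R : realType) (dT : measure_display) (T : measurableType dT)
  (P : probability T R) (N d : nat) (X : 'I_N -> T -> 'cV[R]_d) :=
  forall (I : {set 'I_N}) (B : 'I_N -> 'I_d -> set R),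
    (forall i j, measurable (B i j)) ->
    P (\bigcap_(i in [set i | i \in I]) [set t | forall j, B i j (X i t j ord0)])
    = (\prod_(i in I) P [set t | forall j, B i j (X i t j ord0)])%E.

Definition indep_compressors (R : realType) (dT : measure_display)
  (T : measurableType dT) (P : probability T R) (N d : nat)
  (C : 'I_N -> T -> 'cV[R]_d -> 'cV[R]_d) :=
  forall x : 'I_N -> 'cV[R]_d, indep_vecs P (fun i t => C i t (x i)).

(* Main.v *)
Require Import Defs.
From HB Require Import structures.
From mathcomp Require Import all_boot all_order all_algebra.
From mathcomp Require Import all_classical all_reals all_analysis.
From mathcomp Require Import measurable_realfun.
From mathcomp Require Import ring lra.
Import Order.TTheory GRing.Theory Num.Theory.
Import numFieldNormedType.Exports.
Local Open Scope classical_set_scope.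
Local Open Scope ring_scope.
Set Implicit Arguments. Unset Strict Implicit. Unset Printing Implicit Defensive.

Section Quad.
Variables (R : realType) (d : nat) (A : 'M[R]_d).
Hypothesis AT : A^T = A.
Definition Qf (a b : 'cV[R]_d) : R := (a^T *m A *m b) ord0 ord0.

Lemma QfC a b : Qf a b = Qf b a.
Proof.
rewrite /Qf; transitivity ((a^T *m A *m b)^T ord0 ord0); first by rewrite [in RHS]mxE.
by rewrite !trmx_mul trmxK AT mulmxA.
Qed.

Lemma QfDl a b c : Qf (a + b) c = Qf a c + Qf b c.
Proof. by rewrite /Qf linearD /= !mulmxDl mxE. Qed.
Lemma QfDr a b c : Qf c (a + b) = Qf c a + Qf c b.
Proof. by rewrite /Qf mulmxDr mxE. Qed.
Lemma QfZl k a b : Qf (k *: a) b = k * Qf a b.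
Proof. by rewrite /Qf linearZ /= -!scalemxAl mxE. Qed.
Lemma QfZr k a b : Qf b (k *: a) = k * Qf b a.
Proof. by rewrite /Qf -!scalemxAr mxE. Qed.
End Quad.

Lemma quad_derive (R : realType) (d : nat) (F : 'cV[R]_d -> R) (A : 'M[R]_d)
  (wstar : 'cV[R]_d) : quadratic_obj F A wstar ->
  forall w v, derive F w v = Qf A v (w - wstar).
Proof.
move=> [AT FE] w v.
set b := Qf A v (w - wstar); set c := 2^-1 * Qf A v v.
have key : forall h : R, h != 0 ->
    h^-1 *: ((F \o shift w) (h *: v) - F w) = b + h * c.
  move=> h h0 /=.
  have -> : F (h *: v + w) - F w = (F (h *: v + w) - F wstar) - (F w - F wstar).
    by rewrite opprB addrA subrK.
  rewrite !FE (_ : h *: v + w - wstar = (w - wstar) + h *: v); last by rewrite -addrA addrC.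
  rewrite -/(Qf A (w - wstar + h *: v) (w - wstar + h *: v)) -/(Qf A (w - wstar) (w - wstar)).
  rewrite /b /c; move: (w - wstar) => u.
  rewrite !(QfDl, QfDr, QfZl, QfZr) (QfC AT u v).
  change (h^-1 * (2^-1 * (Qf A u u + h * Qf A v u + (h * Qf A v u + h * (h * Qf A v v))) -
    2^-1 * Qf A u u) = Qf A v u + h * (2^-1 * Qf A v v)).
  by field.
rewrite /derive; apply: cvg_lim => //.
apply: (@cvg_trans _ ((fun h => b + h * c) @ 0^')).
  apply: near_eq_cvg; near=> h; rewrite key //.
  near: h. exact: nbhs_dnbhs_neq.
have H : (fun h => b + h * c) @ 0 --> b + 0 * c.
  apply: cvgD; first exact: cvg_cst.
  apply: cvgMl; exact: cvg_id.
rewrite mul0r addr0 in H.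
exact: cvg_within_filter H.
Unshelve. all: by end_near.
Qed.

Lemma grad_quad (R : realType) (d : nat) (F : 'cV[R]_d -> R) (A : 'M[R]_d)
  (wstar : 'cV[R]_d) : quadratic_obj F A wstar ->
  forall w, grad F w = A *m (w - wstar).
Proof.
move=> qF w; apply/matrixP => j k; rewrite (ord1 k) /grad mxE (quad_derive qF).
rewrite /Qf trmx_delta -mulmxA -rowE mxE //.
Qed.

Lemma gradB (R : realType) (d : nat) (F : 'cV[R]_d -> R) (A : 'M[R]_d)
  (wstar : 'cV[R]_d) : quadratic_obj F A wstar ->
  forall a b, grad F a - grad F b = A *m (a - b).
Proof.
move=> qF a b; rewrite !(grad_quad qF) -mulmxBr; congr (_ *m _).
by rewrite opprB addrA subrK.
Qed.

Lemma sqnorm_ge0 (R : realType) (d : nat) (v : 'cV[R]_d) : 0 <= sqnorm v.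
Proof. by apply: sumr_ge0 => i _; rewrite sqr_ge0. Qed.

Lemma A_bound (R : realType) (d : nat) (F : 'cV[R]_d -> R) (A : 'M[R]_d)
  (wstar : 'cV[R]_d) (L : R) : quadratic_obj F A wstar -> L_smooth F L ->
  forall y, sqnorm (A *m y) <= L ^+ 2 * sqnorm y.
Proof.
move=> qF Ls y.
have := Ls (y + wstar) wstar.
rewrite (gradB qF) addrK.
have h1 := sqr_sqrtr (sqnorm_ge0 (A *m y)).
have h2 := sqr_sqrtr (sqnorm_ge0 y).
have h3 := sqrtr_ge0 (sqnorm (A *m y)).
move: h1 h2 h3.
move: (Num.sqrt (sqnorm (A *m y))) (Num.sqrt (sqnorm y)) => a b <- <- a0 ab.
have: 0 <= L * b by apply: le_trans ab.
nra.
Qed.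

Section indep.
Context d (T : measurableType d) (R : realType) (P : probability T R).
Variables (U V : T -> R).
Hypotheses (mU : measurable_fun setT U) (mV : measurable_fun setT V).
Hypothesis indep : forall A B : set R, measurable A -> measurable B ->
  P (U @^-1` A `&` V @^-1` B) = (P (U @^-1` A) * P (V @^-1` B))%E.
Hypothesis iUV : P.-integrable setT (fun t => (U t * V t)%:E).
Hypothesis iV : P.-integrable setT (fun t => (V t)%:E).
Hypothesis EV : (\int[P]_t (V t)%:E = 0)%E.

HB.instance Definition _ := isMeasurableFun.Build _ _ _ _ U mU.
HB.instance Definition _ := isMeasurableFun.Build _ _ _ _ V mV.
Definition W t := (U t, V t).
Let mW : measurable_fun setT W. Proof. exact: measurable_fun_pair. Qed.
HB.instance Definition _ := isMeasurableFun.Build _ _ _ _ W mW.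

Local Notation mu := (distribution P U).
Local Notation nu := (distribution P V).
Local Notation Q := (distribution P W).
Let f (z : R * R) := (z.1 * z.2)%:E.
Let mf : measurable_fun [set: R * R] f.
Proof.
apply/measurable_EFinP; apply: measurable_funM; [exact: measurable_fst | exact: measurable_snd].
Qed.

Let QE X : measurable X -> (mu \x nu)%E X = Q X.
Proof.
apply: product_measure_unique => A B mA mB.
by rewrite /distribution /pushforward /= -indep.
Qed.

Lemma indep_EUV0 : (\int[P]_t (U t * V t)%:E = 0)%E.
Proof.
have iQ : Q.-integrable setT f.
  by apply: integrable_pushforward => //.
have -> : (\int[P]_t (U t * V t)%:E = \int[Q]_z f z)%E.
  by rewrite integral_distribution.
have iP : (mu \x nu)%E.-integrable setT f.
  apply/integrableP; split => //.
  have <- : (\int[Q]_z `|f z| = \int[(mu \x nu)%E]_z `|f z|)%E.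
    by apply: eq_measure_integral => A mA _; symmetry; exact: QE.
  by case/integrableP: iQ.
have -> : (\int[Q]_z f z = \int[mu \x nu]_z f z)%E.
  by apply: eq_measure_integral => A mA _; symmetry; exact: QE.
rewrite -integral12_prod_meas1 //.
rewrite /fubini_F.
have inu : nu.-integrable setT (fun y => y%:E).
  by apply: integrable_pushforward => //; exact/measurable_EFinP.
transitivity (\int[mu]_x (cst 0%E x))%E; last by rewrite integral0.
apply: eq_integral => x _ /=.
rewrite /f /=.
under eq_integral do rewrite EFinM.
rewrite integralZl //.
have -> : (\int[nu]_y y%:E = \int[P]_t (V t)%:E)%E.
  by rewrite integral_distribution //; exact/measurable_EFinP.
by rewrite EV mule0.
Qed.
End indep.

Section helpers.
Context d (T : measurableType d) (R : realType) (P : probability T R).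

Lemma sqr_norm_eq (x : R) : `|x| ^+ 2 = x ^+ 2.
Proof. by rewrite -normrX ger0_norm // sqr_ge0. Qed.

Lemma int_sq_int (f : T -> R) : measurable_fun setT f ->
  P.-integrable setT (fun t => (f t ^+ 2)%:E) -> P.-integrable setT (fun t => (f t)%:E).
Proof.
move=> mf i2.
apply: (@le_integrable _ _ _ _ _ measurableT _ (fun t => (1 + f t ^+ 2)%:E)) => //.
- exact/measurable_EFinP.
- move=> t _ /=; rewrite lee_fin (ger0_norm (x := 1 + _)); last by rewrite addr_ge0 // sqr_ge0.
  rewrite -sqr_norm_eq; have := normr_ge0 (f t); move: `|f t| => a a0; nra.
- apply: (eq_integrable measurableT (fun t => (EFin \o cst 1) t + (f t ^+ 2)%:E)) => //.
  apply: (integrableD measurableT (f := EFin \o cst 1)) => //.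
  exact: finite_measure_integrable_cst.
Qed.

Lemma int_prod (f g : T -> R) : measurable_fun setT f -> measurable_fun setT g ->
  P.-integrable setT (fun t => (f t ^+ 2)%:E) ->
  P.-integrable setT (fun t => (g t ^+ 2)%:E) ->
  P.-integrable setT (fun t => (f t * g t)%:E).
Proof.
move=> mf mg i1 i2.
apply: (@le_integrable _ _ _ _ _ measurableT _ (fun t => (f t ^+ 2 + g t ^+ 2)%:E)) => //.
- by apply/measurable_EFinP; apply: measurable_funM.
- move=> t _ /=; rewrite lee_fin (ger0_norm (x := _ + _)); last by rewrite addr_ge0 // sqr_ge0.
  rewrite normrM -(sqr_norm_eq (f t)) -(sqr_norm_eq (g t)).
  have := normr_ge0 (f t); have := normr_ge0 (g t).
  move: `|f t| `|g t| => a b b0 a0; nra.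
- apply: (eq_integrable measurableT (fun t => (f t ^+ 2)%:E + (g t ^+ 2)%:E)) => //.
  exact: (integrableD measurableT i1 i2).
Qed.

Lemma sum_sq_int (N : nat) (g : 'I_N -> T -> R) :
  (forall i, measurable_fun setT (g i)) ->
  (forall i, P.-integrable setT (fun t => (g i t ^+ 2)%:E)) ->
  (forall i j, i != j -> (\int[P]_t (g i t * g j t)%:E = 0)%E) ->
  (\int[P]_t ((\sum_(i < N) g i t) ^+ 2)%:E = \sum_(i < N) \int[P]_t (g i t ^+ 2)%:E)%E.
Proof.
move=> mg ig cross.
have ip : forall i j, P.-integrable setT (fun t => (g i t * g j t)%:E).
  by move=> i j; apply: int_prod.
transitivity (\int[P]_t (\sum_(i < N) \sum_(j < N) (g i t * g j t)%:E))%E.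
  apply: eq_integral => t _.
  rewrite expr2 mulr_suml; under eq_bigr do rewrite mulr_sumr.
  rewrite -sumEFin; apply: eq_bigr => i _; by rewrite -sumEFin.
rewrite integral_sum //; last by move=> i; apply: integrable_sum => // j _; exact: ip.
apply: eq_bigr => i _.
rewrite integral_sum //.
rewrite (bigD1 i) //= big1 ?adde0; last first.
  by move=> j ji; apply: cross; rewrite eq_sym.
by apply: eq_integral => t _; rewrite expr2.
Qed.

End helpers.

Lemma sqnorm_scale (R : realType) (d : nat) (c : R) (v : 'cV[R]_d) :
  sqnorm (c *: v) = c ^+ 2 * sqnorm v.
Proof.
rewrite /sqnorm mulr_sumr; apply: eq_bigr => j _; rewrite mxE; ring.
Qed.


Lemma avg_constv (R : realType) (d N : nat) (v : 'cV[R]_d) : (1 <= N)%N ->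
  N%:R^-1 *: (\sum_(i < N) v) = v.
Proof.
move=> N1; rewrite sumr_const card_ord -scalerMnr scalerMnl -mulr_natr mulVf ?scale1r //.
by rewrite pnatr_eq0 -lt0n.
Qed.

Lemma avg_constr (R : realType) (N : nat) (v : R) : (1 <= N)%N ->
  N%:R^-1 * (\sum_(i < N) v) = v.
Proof.
move=> N1; rewrite sumr_const card_ord -(mulr_natl v N) mulrA mulVf ?mul1r //.
by rewrite pnatr_eq0 -lt0n.
Qed.

Section vecmeas.
Context dT (T : measurableType dT) (R : realType) (d : nat).
Definition mcoord (e : T -> 'cV[R]_d) := forall j, measurable_fun setT (fun t => e t j ord0).

Lemma mcoord_sqnorm e : mcoord e -> measurable_fun setT (fun t => sqnorm (e t)).
Proof.
move=> me; rewrite /sqnorm; apply: measurable_sum => j.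
exact: measurable_funX.
Qed.

Lemma mcoord_mul (M : 'M[R]_d) e : mcoord e -> mcoord (fun t => M *m e t).
Proof.
move=> me j.
rewrite (_ : (fun t => _) = fun t => \sum_(k < d) M j k * e t k ord0); last first.
  by apply/funext => t; rewrite mxE.
apply: measurable_sum => k; apply: measurable_funM => //; exact: measurable_cst.
Qed.

Lemma mcoord_subc e c : mcoord e -> mcoord (fun t => e t - c).
Proof.
move=> me j.
rewrite (_ : (fun t => _) = fun t => e t j ord0 - c j ord0); last first.
  by apply/funext => t; rewrite !mxE.
apply: measurable_funB => //; exact: measurable_cst.
Qed.

Lemma mcoord_sum N (e : 'I_N -> T -> 'cV[R]_d) c : (forall i, mcoord (e i)) ->
  mcoord (fun t => c *: \sum_(i < N) e i t).
Proof.
move=> me j.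
rewrite (_ : (fun t => _) = fun t => c * \sum_(i < N) e i t j ord0); last first.
  by apply/funext => t; rewrite !mxE summxE.
apply: measurable_funM; first exact: measurable_cst.
by apply: measurable_sum => i; exact: me.
Qed.
End vecmeas.

Section compfacts.
Context dT (T : measurableType dT) (R : realType) (P : probability T R) (d : nat).
Variables (C : T -> 'cV[R]_d -> 'cV[R]_d) (om : R) (x : 'cV[R]_d).
Hypothesis HC : compressor P C om.
Let e t := C t x - x.

Lemma cf_mcoord : mcoord (fun t => C t x - x).
Proof. apply: mcoord_subc => j; by case: HC. Qed.

Lemma cf_sqnorm_meas : measurable_fun setT (fun t => sqnorm (C t x - x)).
Proof. exact/mcoord_sqnorm/cf_mcoord. Qed.

Lemma cf_sqnorm_int : P.-integrable setT (fun t => (sqnorm (C t x - x))%:E).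
Proof.
apply/integrableP; split; first exact/measurable_EFinP/cf_sqnorm_meas.
under eq_integral do rewrite gee0_abs ?lee_fin ?sqnorm_ge0 //.
case: HC => _ _ /(_ x) h; apply: le_lt_trans h _; exact: ltry.
Qed.

Lemma cf_coord_sq_int k : P.-integrable setT (fun t => ((C t x - x) k ord0 ^+ 2)%:E).
Proof.
apply: (@le_integrable _ _ _ _ _ measurableT _ (fun t => (sqnorm (C t x - x))%:E)).
- by apply/measurable_EFinP; apply: measurable_funX; exact: cf_mcoord.
- move=> t _ /=; rewrite lee_fin !ger0_norm ?sqnorm_ge0 ?sqr_ge0 //.
  rewrite /sqnorm (bigD1 k) //= lerDl; apply: sumr_ge0 => j _; exact: sqr_ge0.
- exact: cf_sqnorm_int.
Qed.

Lemma cf_coord_int k : P.-integrable setT (fun t => ((C t x - x) k ord0)%:E).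
Proof. apply: int_sq_int; [exact: cf_mcoord | exact: cf_coord_sq_int]. Qed.

Lemma cf_mean0 k : (\int[P]_t ((C t x - x) k ord0)%:E = 0)%E.
Proof.
have ic : P.-integrable setT (fun t => (C t x k ord0)%:E).
  apply: (eq_integrable measurableT (fun t => ((C t x - x) k ord0)%:E + (EFin \o cst (x k ord0)) t)) => //.
    by move=> t _ /=; rewrite !mxE -EFinD subrK.
  apply: (integrableD measurableT (cf_coord_int k)).
  exact: finite_measure_integrable_cst.
have ->: (fun t => ((C t x - x) k ord0)%:E) = ((fun t => (C t x k ord0)%:E) \- (EFin \o cst (x k ord0)))%E.
  by apply/funext => t /=; rewrite !mxE.
rewrite integralB //; last exact: finite_measure_integrable_cst.
case: HC => _ -> _.
rewrite (_ : EFin \o cst (x k ord0) = cst (x k ord0)%:E) //.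
rewrite integral_cst //; have h1 := probability_setT P; set p := (X in (_ * X)%E); have -> : p = 1%E by exact: h1.
by rewrite mule1 subee.
Qed.
End compfacts.

Lemma mshift (R : realType) (c : R) (A : set R) : measurable A ->
  measurable [set r : R | A (r - c)].
Proof.
move=> mA.
have h : measurable_fun setT (fun r : R => r - c).
  by apply: measurable_funB => //; exact: measurable_cst.
by have := h measurableT _ mA; rewrite setTI.
Qed.

Section cross.
Context dT (T : measurableType dT) (R : realType) (P : probability T R) (d N : nat).
Variables (C : 'I_N -> T -> 'cV[R]_d -> 'cV[R]_d) (om : R) (x : 'I_N -> 'cV[R]_d).
Hypothesis HC : forall i, compressor P (C i) om.
Hypothesis Hind : indep_compressors P C.

Lemma cross0 i j k : i != j ->
  (\int[P]_t ((C i t (x i) - x i) k ord0 * (C j t (x j) - x j) k ord0)%:E = 0)%E.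
Proof.
move=> ij.
apply: (@indep_EUV0 _ _ _ P (fun t => (C i t (x i) - x i) k ord0) (fun t => (C j t (x j) - x j) k ord0)).
- exact: (cf_mcoord (x i) (HC i) k).
- exact: (cf_mcoord (x j) (HC j) k).
- move=> A B mA mB.
  pose A' := [set r : R | A (r - x i k ord0)].
  pose B' := [set r : R | B (r - x j k ord0)].
  pose Bf := fun (i' : 'I_N) (j' : 'I_d) =>
    if j' == k then (if i' == i then A' else if i' == j then B' else setT) else setT.
  have mBf : forall i' j', measurable (Bf i' j').
    move=> i' j'; rewrite /Bf; case: ifP => _ //; case: ifP => _; first exact: mshift.
    case: ifP => _ //; exact: mshift.
  have := Hind x [set i; j]%SET mBf.
  rewrite big_setU1 ?big_set1 /=; last by rewrite !inE.
  have ji : j != i by rewrite eq_sym.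
  have E1 : \bigcap_(i0 in [set` [set i; j]%SET])
        [set t | (forall j0 : 'I_d, Bf i0 j0 (C i0 t (x i0) j0 ord0))] =
      (fun t : T => (C i t (x i) - x i) k ord0) @^-1` A
     `&` (fun t : T => (C j t (x j) - x j) k ord0) @^-1` B.
    apply/seteqP; split => t /=.
    - move=> H; split.
      + have hi : [set` [set i; j]%SET] i.
          by change (i \in [set i; j]%SET); rewrite !inE eqxx.
        have := H i hi k.
        by rewrite /Bf !eqxx /A' /= !mxE.
      + have hj : [set` [set i; j]%SET] j.
          by change (j \in [set i; j]%SET); rewrite !inE eqxx orbT.
        have := H j hj k.
        by rewrite /Bf !eqxx (negbTE ji) /B' /= !mxE.
    - move=> [hA hB] i0 hi0 j0; rewrite /Bf.
      case: eqP => [->|_] //; case: eqP => [->|_].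
        by rewrite /A' /=; move: hA; rewrite /= !mxE.
      case: eqP => [->|_] //.
      by rewrite /B' /=; move: hB; rewrite /= !mxE.
  have E2 : [set t | (forall j0 : 'I_d, Bf i j0 (C i t (x i) j0 ord0))] =
      (fun t : T => (C i t (x i) - x i) k ord0) @^-1` A.
    apply/seteqP; split => t /=.
    - by move=> /(_ k); rewrite /Bf !eqxx /A' /= !mxE.
    - move=> hA j0; rewrite /Bf; case: eqP => [->|_] //; rewrite eqxx.
      by rewrite /A' /=; move: hA; rewrite /= !mxE.
  have E3 : [set t | (forall j0 : 'I_d, Bf j j0 (C j t (x j) j0 ord0))] =
      (fun t : T => (C j t (x j) - x j) k ord0) @^-1` B.
    apply/seteqP; split => t /=.
    - by move=> /(_ k); rewrite /Bf !eqxx (negbTE ji) /B' /= !mxE.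
    - move=> hB j0; rewrite /Bf; case: eqP => [->|_] //; rewrite eqxx (negbTE ji).
      by rewrite /B' /=; move: hB; rewrite /= !mxE.
  by rewrite E1 E2 E3.
- apply: (@int_prod _ _ _ P (fun t => (C i t (x i) - x i) k ord0) (fun t => (C j t (x j) - x j) k ord0)); [exact: (cf_mcoord (x i) (HC i) k) | exact: (cf_mcoord (x j) (HC j) k) |
     exact: (cf_coord_sq_int (x i) (HC i)) | exact: (cf_coord_sq_int (x j) (HC j))].
- exact: (cf_coord_int (x j) (HC j)).
- exact: (cf_mean0 (x j) (HC j)).
Qed.
End cross.

Section sumb.
Context dT (T : measurableType dT) (R : realType) (P : probability T R) (d N : nat).
Variables (C : 'I_N -> T -> 'cV[R]_d -> 'cV[R]_d) (om : R) (x : 'I_N -> 'cV[R]_d).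
Hypothesis HC : forall i, compressor P (C i) om.
Hypothesis Hind : indep_compressors P C.

Lemma sum_bound :
  (\int[P]_t (sqnorm (\sum_(i < N) (C i t (x i) - x i)))%:E <=
   (\sum_(i < N) om * sqnorm (x i))%:E)%E.
Proof.
rewrite /sqnorm.
under eq_integral do rewrite -sumEFin.
rewrite ge0_integral_sum //; last 2 first.
  move=> k; apply/measurable_EFinP; apply: measurable_funX.
  rewrite (_ : (fun t => _) = fun t => \sum_(i < N) (C i t (x i) - x i) k ord0); last first.
    by apply/funext => t; rewrite summxE.
  by apply: measurable_sum => i; exact: (cf_mcoord (x i) (HC i)).
  by move=> k t _; rewrite lee_fin sqr_ge0.
rewrite (eq_bigr (fun k => \sum_(i < N) \int[P]_t (((C i t (x i) - x i) k ord0) ^+ 2)%:E)%E); last first.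
  move=> k _.
  under eq_integral do rewrite summxE.
  apply: (@sum_sq_int _ _ _ P N (fun i t => (C i t (x i) - x i) k ord0)).
  - by move=> i; exact: (cf_mcoord (x i) (HC i)).
  - by move=> i; exact: (cf_coord_sq_int (x i) (HC i)).
  - by move=> i j ij; exact: cross0.
rewrite exchange_big /= -sumEFin; apply: lee_sum => i _.
rewrite -ge0_integral_sum //; last 2 first.
  by move=> k; apply/measurable_EFinP; apply: measurable_funX; exact: (cf_mcoord (x i) (HC i)).
  by move=> k t _; rewrite lee_fin sqr_ge0.
under eq_integral do rewrite sumEFin.
by case: (HC i) => _ _ ->.
Qed.
End sumb.

Unset Implicit Arguments. Set Strict Implicit. Set Printing Implicit Defensive.

Theorem mainTheorem10 (R : realType) (dT : measure_display) (T : measurableType dT)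
  (P : probability T R) (d N : nat) (F : 'cV[R]_d -> R) (A : 'M[R]_d)
  (wstar : 'cV[R]_d) (L omega_dwn : R) :
  (1 <= N)%N -> 0 < omega_dwn ->
  quadratic_obj F A wstar -> L_smooth F L ->
  (* MCM (C = 1): one shared memory H and one shared downlink compression *)
  (forall (Cdwn : T -> 'cV[R]_d -> 'cV[R]_d),
     compressor P Cdwn omega_dwn ->
     forall (w_prev H_prev : 'cV[R]_d),
       let what := fun t => H_prev + Cdwn t (w_prev - H_prev) in
       (\int[P]_t (sqnorm (N%:R^-1 *: (\sum_(i < N) grad F (what t))
                            - grad F w_prev))%:E
        <= ((L ^+ 2 * omega_dwn / 1) *
            (N%:R^-1 * \sum_(i < N) sqnorm (w_prev - H_prev)))%:E)%E) /\
  (* Rand-MCM (C = N): per-worker memories H^i, independent compressions *)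
  (forall (Cdwn : 'I_N -> T -> 'cV[R]_d -> 'cV[R]_d),
     (forall i, compressor P (Cdwn i) omega_dwn) ->
     indep_compressors P Cdwn ->
     forall (w_prev : 'cV[R]_d) (H_prev : 'I_N -> 'cV[R]_d),
       let what := fun i t => H_prev i + Cdwn i t (w_prev - H_prev i) in
       (\int[P]_t (sqnorm (N%:R^-1 *: (\sum_(i < N) grad F (what i t))
                            - grad F w_prev))%:E
        <= ((L ^+ 2 * omega_dwn / N%:R) *
            (N%:R^-1 * \sum_(i < N) sqnorm (w_prev - H_prev i)))%:E)%E).
Proof.
move=> N1 om0 qF Ls; split.
- move=> C HC w H; cbv zeta.
  have E : forall t, N%:R^-1 *: (\sum_(i < N) grad F (H + C t (w - H))) - grad F w
      = A *m (C t (w - H) - (w - H)).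
    move=> t; rewrite avg_constv // (gradB qF); congr (_ *m _).
    by rewrite opprB [H + _]addrC -addrA.
  under eq_integral => t _ do rewrite E.
  rewrite divr1 avg_constr //.
  apply: (@le_trans _ _ (\int[P]_t ((L ^+ 2 * sqnorm (C t (w - H) - (w - H)))%:E))%E).
    apply: ge0_le_integral => //.
    - by move=> t _; rewrite lee_fin sqnorm_ge0.
    - apply/measurable_EFinP; apply: mcoord_sqnorm; apply: mcoord_mul.
      exact: (cf_mcoord (w - H) HC).
    - apply/measurable_EFinP; apply: measurable_funM; first exact: measurable_cst.
      exact: (cf_sqnorm_meas (w - H) HC).
    - by move=> t _; rewrite lee_fin (A_bound qF Ls).
  under eq_integral do rewrite (EFinM (L ^+ 2)).
  rewrite ge0_integralZl //; last 3 first.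
  + exact/measurable_EFinP/(cf_sqnorm_meas (w - H) HC).
  + by move=> t _; rewrite lee_fin sqnorm_ge0.
  + by rewrite lee_fin sqr_ge0.
  rewrite -mulrA (EFinM (L ^+ 2)); apply: lee_wpmul2l; first by rewrite lee_fin sqr_ge0.
  by case: HC => _ _ ->.
- move=> C HC Hind w H; cbv zeta.
  set x := fun i => w - H i.
  have E : forall t, N%:R^-1 *: (\sum_(i < N) grad F (H i + C i t (w - H i))) - grad F w
      = N%:R^-1 *: (A *m \sum_(i < N) (C i t (x i) - x i)).
    move=> t; rewrite -(avg_constv (grad F w) N1) -scalerBr -sumrB.
    rewrite mulmx_sumr; congr (_ *: _); apply: eq_bigr => i _.
    rewrite (gradB qF) /x; congr (_ *m _).
    by rewrite opprB [H i + _]addrC -addrA.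
  under eq_integral => t _ do rewrite E sqnorm_scale.
  have me : mcoord (fun t => \sum_(i < N) (C i t (x i) - x i)).
    have := mcoord_sum 1 (fun i => cf_mcoord (x i) (HC i)).
    by move=> h j; have := h j; under eq_fun do rewrite scale1r.
  apply: (@le_trans _ _ (\int[P]_t ((N%:R^-1 ^+ 2 * L ^+ 2 * sqnorm (\sum_(i < N) (C i t (x i) - x i)))%:E))%E).
    apply: ge0_le_integral => //.
    - by move=> t _; rewrite lee_fin mulr_ge0 ?sqr_ge0 ?sqnorm_ge0.
    - apply/measurable_EFinP; apply: measurable_funM; first exact: measurable_cst.
      by apply: mcoord_sqnorm; apply: mcoord_mul.
    - apply/measurable_EFinP; apply: measurable_funM; first exact: measurable_cst.
      exact: mcoord_sqnorm.
    - move=> t _; rewrite lee_fin -mulrA ler_wpM2l ?sqr_ge0 //.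
      exact: (A_bound qF Ls).
  under eq_integral do rewrite (EFinM (N%:R^-1 ^+ 2 * L ^+ 2)).
  rewrite ge0_integralZl //; last 3 first.
  + exact/measurable_EFinP/mcoord_sqnorm.
  + by move=> t _; rewrite lee_fin sqnorm_ge0.
  + by rewrite lee_fin mulr_ge0 // sqr_ge0.
  apply: le_trans.
    apply: lee_wpmul2l; first by rewrite lee_fin mulr_ge0 // sqr_ge0.
    exact: (sum_bound x HC Hind).
  rewrite -EFinM lee_fin -mulr_sumr le_eqVlt; apply/orP; left; apply/eqP.
  rewrite /x; ring.
Qed.
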